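(* Let $1\le p<\infty$, $N\ge2$, and let $T_i=T_{f_i,\omega^{(i)}}$ ($1\le i\le N$) be unilateral pseudo-shifts on $\ell^p(\mathbb{N})$. Then $T_1,\dots,T_N$ are s-hypercyclic if and only if they are densely s-hypercyclic.
   Context: $\{e_m\}$ is the canonical basis of $\ell^p(\mathbb{N})$ over $\mathbb{K}\in\{\mathbb{R},\mathbb{C}\}$. For a strictly increasing $f:\mathbb{N}\to\mathbb{N}$ with $f(1)>1$ and a bounded, nonzero sequence of scalars $\omega=(w_{f(m)})_m$, $T_{f,\omega}(\sum_m\alpha_me_m)=\sum_mw_{f(m)}\alpha_{f(m)}e_m$. A vector $x$ is s-hypercyclic for operators $T_1,\dots,T_N$ on $X$ if the closure of $\{(T_1^nx,\dots,T_N^nx):n\in\mathbb{N}\}$ contains the diagonal $\{(y,\dots,y):y\in X\}$ of $\oplus_{i=1}^NX$; the operators are s-hypercyclic if such $x$ exists, and densely s-hypercyclic if the set of such $x$ is dense. *)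

(* Defs.v *)
From HB Require Import structures.
From mathcomp Require Import all_boot all_order all_algebra.
From mathcomp Require Import all_classical all_reals all_analysis.
From mathcomp Require Import complex.
Set Implicit Arguments. Unset Strict Implicit. Unset Printing Implicit Defensive.
Import Order.TTheory GRing.Theory Num.Theory numFieldTopology.Exports numFieldNormedType.Exports.
Local Open Scope ring_scope.

(* Sequences are indexed by nat = {0,1,2,...}; the paper's e_m (m >= 1)
   corresponds to index m-1 here.  Scalars live in K, with a modulus
   nrm : K -> R (|.| for K = R, the complex modulus for K = R[i]). *)
Section Lp.
Variables (R : realType) (K : pzRingType) (nrm : K -> R) (p : R).

Definition lp_psum (x : nat -> K) : nat -> R :=
  series (fun m => nrm (x m) `^ p).

Definition lp_mem (x : nat -> K) : Prop := cvgn (lp_psum x).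

Definition lp_norm (x : nat -> K) : R := (limn (lp_psum x)) `^ p^-1.

Definition lp_dist (x y : nat -> K) : R := lp_norm (fun m => x m - y m).

(* x is an s-hypercyclic vector for T_0,...,T_{N-1} on l^p: the closure of
   {(T_0^n x, ..., T_{N-1}^n x) : n >= 1} in the direct sum contains the
   diagonal; i.e. every diagonal point (y,...,y), y in l^p, is approximated
   (in the product topology) by orbit points. *)
Definition s_hypercyclic_vector (N : nat) (T : 'I_N -> (nat -> K) -> (nat -> K))
    (x : nat -> K) : Prop :=
  lp_mem x /\
  forall y, lp_mem y -> forall e : R, 0 < e ->
    exists n : nat, (0 < n)%N /\ forall i : 'I_N, lp_dist (iter n (T i) x) y < e.

Definition s_hypercyclic (N : nat) (T : 'I_N -> (nat -> K) -> (nat -> K)) : Prop :=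
  exists x, s_hypercyclic_vector T x.

Definition densely_s_hypercyclic (N : nat) (T : 'I_N -> (nat -> K) -> (nat -> K)) : Prop :=
  forall z, lp_mem z -> forall e : R, 0 < e ->
    exists x, s_hypercyclic_vector T x /\ lp_dist x z < e.

End Lp.

(* Unilateral weighted pseudo-shift T_{f,w} (sum_m a_m e_m) = sum_m w_m a_{f(m)} e_m,
   where w m stands for the paper's w_{f(m)}. *)
Definition pseudo_shift (K : pzRingType) (f : nat -> nat) (w : nat -> K)
    (x : nat -> K) : nat -> K :=
  fun m => w m * x (f m).

(* Admissible data: f strictly increasing with f(1) > 1 (0-based: f 0 > 0),
   w a bounded sequence of nonzero scalars. *)
Definition pseudo_shift_data (R : realType) (K : pzRingType) (nrm : K -> R)
    (f : nat -> nat) (w : nat -> K) : Prop :=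
  {homo f : m n / (m < n)%N} /\ (0 < f 0%N)%N /\
  (forall m, w m != 0) /\ (exists M : R, forall m, nrm (w m) <= M).

Definition cmod (R : realType) (z : R[i]) : R := ComplexField.Normc.normc z.

(* Main.v *)
Require Import Defs.
From HB Require Import structures.
From mathcomp Require Import all_boot all_order all_algebra.
From mathcomp Require Import all_classical all_reals all_analysis.
From mathcomp Require Import complex.
From mathcomp Require Import ring lra.
Import Order.TTheory GRing.Theory Num.Theory numFieldTopology.Exports numFieldNormedType.Exports.
Local Open Scope classical_set_scope.
Local Open Scope ring_scope.

Section Gen.
Variables (R : realType) (K : pzRingType) (nrm : K -> R) (p : R).
Hypotheses (p1 : 1 <= p) (nge0 : forall a, 0 <= nrm a) (n0 : nrm 0 = 0)
 (ntri : forall a b, nrm (a + b) <= nrm a + nrm b) (nN : forall a, nrm (- a) = nrm a)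
 (nM : forall a b, nrm (a * b) = nrm a * nrm b)
 (nsurj : forall r, 0 <= r -> exists t, nrm t = r).

Let p0 : 0 < p. Proof. exact: lt_le_trans p1. Qed.

Lemma lepow a b : 0 <= a -> 0 <= b -> (a `^ p <= b `^ p) = (a <= b).
Proof.
move=> a0 b0; apply/idP/idP; last by apply: ge0_ler_powR; rewrite ?nnegrE // ltW.
apply: contraTT; rewrite -!ltNge => ba.
by apply: gt0_ltr_powR; rewrite ?nnegrE.
Qed.

Lemma ltpow a b : 0 <= a -> 0 <= b -> (a `^ p < b `^ p) = (a < b).
Proof. by move=> a0 b0; rewrite !ltNge lepow. Qed.

Lemma P0 : nrm 0 `^ p = 0.
Proof. by rewrite n0 powR0 // gt_eqF. Qed.

Lemma psum_nd (x : nat -> K) : {homo lp_psum nrm p x : n m / (n <= m)%N >-> n <= m}.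
Proof.
move=> n m nm; rewrite /lp_psum /series /=.
by apply: (@nondecreasing_series _ _ xpredT 0%N) => // k _ _; exact: powR_ge0.
Qed.

Lemma psum_ge0 (x : nat -> K) n : 0 <= lp_psum nrm p x n.
Proof.
rewrite /lp_psum /series /=; apply: sumr_ge0 => i _; exact: powR_ge0.
Qed.

Lemma psum_le_lim x n : lp_mem nrm p x -> lp_psum nrm p x n <= limn (lp_psum nrm p x).
Proof. move=> h; exact: (nondecreasing_cvgn_le (psum_nd x)). Qed.

Lemma lim_ge0 x : lp_mem nrm p x -> 0 <= limn (lp_psum nrm p x).
Proof. move=> h; exact: le_trans (psum_ge0 x 0) (psum_le_lim x 0 h). Qed.

Lemma mem_bnd x M : (forall n, lp_psum nrm p x n <= M) -> lp_mem nrm p x.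
Proof.
move=> h; apply: nondecreasing_is_cvgn; first exact: psum_nd.
by exists M => _ [n _ <-].
Qed.

Lemma lim_bnd x M : lp_mem nrm p x -> (forall n, lp_psum nrm p x n <= M) ->
  limn (lp_psum nrm p x) <= M.
Proof. move=> h hb; apply: limr_le => //; exact: nearW. Qed.

Lemma term_le x k : lp_mem nrm p x -> nrm (x k) `^ p <= limn (lp_psum nrm p x).
Proof.
move=> h; apply: le_trans (psum_le_lim x k.+1 h).
rewrite /lp_psum seriesSr lerDr; exact: psum_ge0.
Qed.

Lemma dist_lt x y e : 0 < e -> lp_mem nrm p (fun m => x m - y m) ->
  (lp_dist nrm p x y < e) = (limn (lp_psum nrm p (fun m => x m - y m)) < e `^ p).
Proof.
move=> e0 h; rewrite /lp_dist /lp_norm.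
set l := limn _.
have l0 : 0 <= l by exact: lim_ge0.
rewrite -ltpow ?powR_ge0 ?(ltW e0) // -powRrM mulVf ?gt_eqF // powRr1 //.
Qed.


Lemma nB a b : nrm (a - b) <= nrm a + nrm b.
Proof. by rewrite -(nN b) ntri. Qed.

Lemma pw2 a b : nrm (a - b) `^ p <= 2 `^ p * (nrm a `^ p + nrm b `^ p).
Proof.
have h : nrm (a - b) `^ p <= (nrm a + nrm b) `^ p.
  by rewrite lepow ?addr_ge0 ?nB.
apply: le_trans h _.
have [uv|vu] := leP (nrm a) (nrm b).
  have : (nrm a + nrm b) `^ p <= (2 * nrm b) `^ p.
    by rewrite lepow ?addr_ge0 ?mulr_ge0 // mulr2n mulrDl mul1r lerD2r.
  move/le_trans; apply; rewrite powRM // ler_wpM2l ?powR_ge0 // lerDr powR_ge0 //.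
have : (nrm a + nrm b) `^ p <= (2 * nrm a) `^ p.
  by rewrite lepow ?addr_ge0 ?mulr_ge0 // mulr2n mulrDl mul1r lerD2l ltW.
move/le_trans; apply; rewrite powRM // ler_wpM2l ?powR_ge0 // lerDl powR_ge0 //.
Qed.

Lemma mem_cmp x y C : 0 <= C -> lp_mem nrm p y ->
  (forall m, nrm (x m) `^ p <= C * nrm (y m) `^ p) -> lp_mem nrm p x.
Proof.
move=> C0 hy h; apply: (@mem_bnd _ (C * limn (lp_psum nrm p y))) => n.
apply: le_trans (_ : C * lp_psum nrm p y n <= _); last first.
  by rewrite ler_wpM2l // psum_le_lim.
rewrite /lp_psum /series /= big_distrr /=; apply: ler_sum => i _; exact: h.
Qed.



Lemma mem_sub x y : lp_mem nrm p x -> lp_mem nrm p y -> lp_mem nrm p (fun m => x m - y m).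
Proof.
move=> hx hy; apply: (@mem_bnd _ (2 `^ p * (limn (lp_psum nrm p x) + limn (lp_psum nrm p y)))) => n.
apply: le_trans (_ : 2 `^ p * (lp_psum nrm p x n + lp_psum nrm p y n) <= _); last first.
  by rewrite ler_wpM2l ?powR_ge0 // lerD // psum_le_lim.
rewrite /lp_psum /series /= -big_split big_distrr /=; apply: ler_sum => i _; exact: pw2.
Qed.

Lemma mem0 : lp_mem nrm p (fun _ => 0).
Proof. apply: (@mem_bnd _ 0) => n; rewrite /lp_psum /series /= big1 // => i _; exact: P0. Qed.


Lemma fgt (f : nat -> nat) : {homo f : m n / (m < n)%N} -> (0 < f 0)%N ->
  forall j, (j < f j)%N.
Proof.
move=> hf f0; elim=> // j ih; apply: leq_ltn_trans ih _; exact: hf.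
Qed.

Lemma sum_reindex (g : nat -> R) (f : nat -> nat) : (forall j, 0 <= g j) ->
  {homo f : m n / (m < n)%N} ->
  forall n, \sum_(0 <= m < n) g (f m) <= \sum_(0 <= j < f n) g j.
Proof.
move=> g0 hf; elim=> [|n ih].
  by rewrite big_geq // sumr_ge0.
rewrite big_nat_recr //= (le_trans (lerD ih (lexx _))) //.
rewrite -big_nat_recr //=.
apply: (@nondecreasing_series _ _ xpredT 0%N) => //; exact: hf.
Qed.

Lemma mem_shift f w x : pseudo_shift_data nrm f w -> lp_mem nrm p x ->
  lp_mem nrm p (pseudo_shift f w x).
Proof.
move=> [hf [f0 [w0 [M hM]]]] hx.
have M0 : 0 <= M by apply: le_trans (hM 0%N).
apply: (@mem_bnd _ (M `^ p * limn (lp_psum nrm p x))) => n.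
apply: le_trans (_ : M `^ p * \sum_(0 <= m < n) nrm (x (f m)) `^ p <= _).
  rewrite /lp_psum /series /= big_distrr /=; apply: ler_sum => i _.
  rewrite /pseudo_shift nM powRM // ler_wpM2r ?powR_ge0 // lepow //.
rewrite ler_wpM2l ?powR_ge0 //.
have := sum_reindex (fun j => nrm (x j) `^ p) f (fun j => powR_ge0 _ _) hf n.
move=> /le_trans; apply; exact: (psum_le_lim x (f n) hx).
Qed.

Lemma mem_iter f w x n : pseudo_shift_data nrm f w -> lp_mem nrm p x ->
  lp_mem nrm p (iter n (pseudo_shift f w) x).
Proof. by move=> hd hx; elim: n => //= n ih; apply: mem_shift. Qed.

Lemma iter_agree f w : pseudo_shift_data nrm f w -> forall n L x x',
  (L <= n)%N -> (forall j, (L <= j)%N -> x j = x' j) ->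
  iter n (pseudo_shift f w) x = iter n (pseudo_shift f w) x'.
Proof.
move=> [hf [f0 _]]; elim=> [|n ih] L x x' Ln hxx.
  by apply/funext => j /=; apply: hxx; exact: leq_trans Ln _.
rewrite !iterSr; apply: (ih L.-1) => [|j Lj]; first by case: (L) Ln.
rewrite /pseudo_shift hxx //; have := fgt f hf f0 j; apply: leq_trans.
by case: (L) Lj.
Qed.


Lemma near_all (Q : nat -> nat -> Prop) L :
  (forall j, (j < L)%N -> \forall m \near \oo, Q j m) ->
  \forall m \near \oo, forall j, (j < L)%N -> Q j m.
Proof.
elim: L => [_|L ih h]; first by apply: nearW => m j.
have h1 := ih (fun j jL => h j (ltnW (leq_trans jL (leqnn _)))).
have h2 := h L (ltnSn L).
apply: filterS2 h1 h2 => m H1 H2 j; rewrite ltnS leq_eqVlt => /orP [/eqP -> //| jL].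
exact: H1.
Qed.

Lemma near_ex (Q : nat -> Prop) : (\forall m \near \oo, Q m) -> exists k, Q k.
Proof. by case=> k0 _ hk0; exists k0; apply: hk0 => /=. Qed.

Lemma ind_sum (c : R) k n :
  \sum_(0 <= m < n) (if m == k then c else 0) = if (k < n)%N then c else 0.
Proof.
elim: n => [|n ih]; first by rewrite big_geq.
rewrite big_nat_recr //= ih.
case: (eqVneq n k) => [->|nk]; first by rewrite ltnn ltnSn add0r.
rewrite eq_sym in nk; rewrite addr0; have -> : (k < n.+1)%N = (k < n)%N by rewrite ltnS leq_eqVlt (negPf nk).
done.
Qed.


Lemma id1 (a b t : K) : t = (a - b) - (a - (b + t)).
Proof. by rewrite opprB addrC addrA subrK addrC addKr. Qed.
Lemma id2 (a b t : K) : a - b = (a - (b + t)) - - t.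
Proof. by rewrite opprK opprD addrA subrK. Qed.

Lemma large_n N (i0 : 'I_N) (f : 'I_N -> nat -> nat) (w : 'I_N -> nat -> K) :
  (forall i, pseudo_shift_data nrm (f i) (w i)) -> forall x,
  s_hypercyclic_vector nrm p (fun i => pseudo_shift (f i) (w i)) x ->
  forall y, lp_mem nrm p y -> forall e, 0 < e -> forall L,
  exists n, (L <= n)%N /\ (0 < n)%N /\
    forall i, lp_dist nrm p (iter n (pseudo_shift (f i) (w i)) x) y < e.
Proof.
move=> hd x [hx hc] y hy e e0 L.
pose del := e / 8.
have del0 : 0 < del by rewrite divr_gt0.
have e4 : 0 <= e / 4 by rewrite divr_ge0 // ltW.
have [t ht] := nsurj (e / 4) e4.
pose v j := iter j (pseudo_shift (f i0) (w i0)) x.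
have hv j : lp_mem nrm p (fun m => v j m - y m).
  exact: mem_sub _ _ (mem_iter (f i0) (w i0) x j (hd i0) hx) hy.
have [k hk] : exists k, forall j, (j < L)%N -> nrm (v j k - y k) < del.
  apply: (@near_ex (fun k => forall j, (j < L)%N -> nrm (v j k - y k) < del)).
  apply: (@near_all (fun j m => nrm (v j m - y m) < del)) => j _.
  have c0 := @cvg_series_cvg_0 _ _ (fun m => nrm (v j m - y m) `^ p) (hv j).
  have := @cvgr0_norm_lt _ _ _ _ eventually_filter _ c0 _ (powR_gt0 p del0).
  apply: filterS => m /=; rewrite ger0_norm ?powR_ge0 // ltpow ?(ltW del0) //.
pose y' := fun m => y m - (if m == k then - t else 0).
have hg : lp_mem nrm p (fun m => if m == k then - t else 0).
  apply: (@mem_bnd _ (nrm (- t) `^ p)) => n.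
  have h1 : lp_psum nrm p (fun m => if m == k then - t else 0) n <=
     \sum_(0 <= m < n) (if m == k then nrm (- t) `^ p else 0).
    by rewrite /lp_psum /series /=; apply: ler_sum => m _; case: eqP => _ //; rewrite P0.
  apply: le_trans h1 _; rewrite ind_sum; case: ifP => // _; exact: powR_ge0.
have hy' : lp_mem nrm p y' := mem_sub _ _ hy hg.
have [n [n0' hn]] := hc y' hy' del del0.
have key i : lp_mem nrm p (fun m => iter n (pseudo_shift (f i) (w i)) x m - y' m) /\
   nrm (iter n (pseudo_shift (f i) (w i)) x k - y' k) < del /\
   limn (lp_psum nrm p (fun m => iter n (pseudo_shift (f i) (w i)) x m - y' m)) < del `^ p.
  have hm := mem_sub _ _ (mem_iter (f i) (w i) x n (hd i) hx) hy'.
  have := hn i; rewrite dist_lt // => hS.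
  split=> //; split=> //.
  rewrite -ltpow ?nge0 ?(ltW del0) //; exact: (le_lt_trans (term_le _ k hm) hS).
have y'k : y' k = y k + t by rewrite /y' eqxx opprK.
exists n; split; last split => //.
  rewrite leqNgt; apply/negP => nL.
  have h1 := hk n nL.
  have [_ [h2 _]] := key i0.
  have : nrm t < del + del.
    have -> : t = (v n k - y k) - (v n k - y' k).
      by rewrite y'k; apply: id1.
    apply: le_lt_trans (nB _ _) _; exact: ltrD.
  rewrite ht /del; lra.
move=> i; have [hm [hk' hS']] := key i.
set u := iter n _ x.
have hmy : lp_mem nrm p (fun m => u m - y m) := mem_sub _ _ (mem_iter (f i) (w i) x n (hd i) hx) hy.
rewrite dist_lt //.
have huk : nrm (u k - y k) <= del + e / 4.
  have -> : u k - y k = (u k - y' k) - - t by rewrite y'k; apply: id2.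
  by apply: le_trans (nB _ _) _; rewrite nN ht lerD2r ltW.
have hP : nrm (u k - y k) `^ p <= (e / 2) `^ p.
  rewrite lepow ?divr_ge0 ?(ltW e0) //; apply: le_trans huk _; rewrite /del; lra.
have hS : limn (lp_psum nrm p (fun m => u m - y m)) <=
    limn (lp_psum nrm p (fun m => u m - y' m)) + (e / 2) `^ p.
  apply: lim_bnd => // m.
  apply: le_trans (_ : lp_psum nrm p (fun m => u m - y' m) m + nrm (u k - y k) `^ p <= _);
    last by rewrite lerD // psum_le_lim.
  apply: le_trans (_ : \sum_(0 <= j < m) (nrm (u j - y' j) `^ p +
       (if j == k then nrm (u k - y k) `^ p else 0)) <= _).
    rewrite /lp_psum /series /=; apply: ler_sum => j _; rewrite /y'.
    case: eqP => [->|_]; first by rewrite lerDr powR_ge0.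
    by rewrite subr0 addr0.
  rewrite big_split /= ind_sum lerD2l; case: ifP => // _; exact: powR_ge0.
apply: le_lt_trans hS _.
have h8 : del `^ p <= 8^-1 * e `^ p.
  rewrite /del [e / _]mulrC; apply: ge1r_powRZ => //; last exact: ltW.
  by apply/andP; split; lra.
have h2 : (e / 2) `^ p <= 2^-1 * e `^ p.
  rewrite [e / _]mulrC; apply: ge1r_powRZ => //; last exact: ltW.
  by apply/andP; split; lra.
have ep : 0 < e `^ p by rewrite powR_gt0.
lra.
Qed.


Lemma dense_main N (i0 : 'I_N) (f : 'I_N -> nat -> nat) (w : 'I_N -> nat -> K) :
  (forall i, pseudo_shift_data nrm (f i) (w i)) ->
  s_hypercyclic nrm p (fun i => pseudo_shift (f i) (w i)) ->
  densely_s_hypercyclic nrm p (fun i => pseudo_shift (f i) (w i)).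
Proof.
move=> hd [x hxv] z hz e e0.
have hx := hxv.1.
have hdz := mem_sub x z hx hz.
set d := (fun m => x m - z m) in hdz.
set l := limn (lp_psum nrm p d).
have ep : 0 < e `^ p by rewrite powR_gt0.
have [L hL] : exists L, l - lp_psum nrm p d L < e `^ p.
  have := proj1 (cvgrPdist_lt _ _) hdz _ ep.
  move=> H; have [L hL] := near_ex _ (H eventually_filter); exists L; apply: le_lt_trans hL; exact: ler_norm.
pose x' m := if (m < L)%N then z m else x m.
exists x'; split; first split.
- apply: (@mem_bnd _ (limn (lp_psum nrm p x) + limn (lp_psum nrm p z))) => n.
  apply: le_trans (_ : lp_psum nrm p x n + lp_psum nrm p z n <= _); last first.
    by rewrite lerD // psum_le_lim.
  rewrite /lp_psum /series /= -big_split /=; apply: ler_sum => m _; rewrite /x'.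
  by case: ifP => _; rewrite ?lerDl ?lerDr powR_ge0.
- move=> y hy e2 e20.
  have [n [Ln [npos hn]]] := @large_n N i0 f w hd x hxv y hy e2 e20 L.
  exists n; split; first exact: npos.
  move=> i; rewrite (@iter_agree _ _ (hd i) n L x' x Ln); first exact: hn.
  by move=> j Lj; rewrite /x' ltnNge Lj.
have hd' : lp_mem nrm p (fun m => x' m - z m).
  apply: (@mem_cmp _ d 1) => // m; rewrite mul1r /x' /d.
  by case: ifP => _ //; rewrite subrr P0 powR_ge0.
rewrite dist_lt //; apply: le_lt_trans hL.
apply: lim_bnd => // n.
have h0 : (0 <= L <= n + L)%N by rewrite leq_addl.
apply: le_trans (psum_nd (fun m => x' m - z m) n (n + L) (leq_addr L n)) _.
have H := psum_le_lim _ (n + L) hdz.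
rewrite /lp_psum /series /= (big_cat_nat _ h0) /= in H.
rewrite lerBrDr /lp_psum /series /= (big_cat_nat _ h0) /=.
rewrite big_nat_cond big1 ?add0r; last first.
  by move=> m /andP[/andP[_ mL] _]; rewrite /x' mL subrr P0.
have -> : \sum_(L <= i < n + L) nrm (x' i - z i) `^ p = \sum_(L <= i < n + L) nrm (d i) `^ p.
  by apply: eq_big_nat => m /andP[Lm _]; rewrite /x' ltnNge Lm.
by rewrite addrC.
all: by [].
Qed.

Lemma equiv_main N (i0 : 'I_N) (f : 'I_N -> nat -> nat) (w : 'I_N -> nat -> K) :
  (forall i, pseudo_shift_data nrm (f i) (w i)) ->
  s_hypercyclic nrm p (fun i => pseudo_shift (f i) (w i)) <->
  densely_s_hypercyclic nrm p (fun i => pseudo_shift (f i) (w i)).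
Proof.
move=> hd; split; first exact: dense_main.
move=> D; have [x [hx _]] := D _ mem0 1 ltr01; by exists x.
Qed.

End Gen.

Local Close Scope classical_set_scope.

Theorem corollary3p4 (R : realType) (p : R) (N : nat) :
  1 <= p -> (2 <= N)%N ->
  (* K = R *)
  (forall (f : 'I_N -> nat -> nat) (w : 'I_N -> nat -> R),
     (forall i, pseudo_shift_data (fun x : R => `|x|) (f i) (w i)) ->
     let T := fun i => pseudo_shift (f i) (w i) in
     s_hypercyclic (fun x : R => `|x|) p T <-> densely_s_hypercyclic (fun x : R => `|x|) p T) /\
  (* K = C *)
  (forall (f : 'I_N -> nat -> nat) (w : 'I_N -> nat -> R[i]),
     (forall i, pseudo_shift_data (@cmod R) (f i) (w i)) ->
     let T := fun i => pseudo_shift (f i) (w i) in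
     s_hypercyclic (@cmod R) p T <-> densely_s_hypercyclic (@cmod R) p T).
Proof.
move=> p1 hN.
have i0 : 'I_N := Ordinal (leq_trans (isT : (0 < 2)%N) hN).
split=> f w hd T.
  apply: (@equiv_main R R (fun x : R => `|x|) p p1 _ _ _ _ _ _ N i0 f w hd).
  - by move=> a /=; rewrite normr_ge0.
  - by rewrite /= normr0.
  - by move=> a b /=; rewrite ler_normD.
  - by move=> a /=; rewrite normrN.
  - by move=> a b /=; rewrite normrM.
  - by move=> r r0; exists r; rewrite /= ger0_norm.
apply: (@equiv_main R _ (@cmod R) p p1 _ _ _ _ _ _ N i0 f w hd).
- by move=> [a b]; rewrite /cmod /ComplexField.Normc.normc sqrtr_ge0.
- exact: ComplexField.Normc.normc0.
- by move=> a b; apply: le_normcD.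
- by move=> a; apply: normcN.
- by move=> a b; apply: ComplexField.Normc.normcM.
- move=> r r0; exists (r%:C)%C; rewrite /cmod /ComplexField.Normc.normc /=.
  by rewrite expr0n /= addr0 sqrtr_sqr ger0_norm.
Qed.
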